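(* For any $a\in\mathbb R$ and $\beta\in\mathbb S^1$, let $t_0=-\log\sqrt{1+a^2}$ and $s=\frac{-a}{\sqrt{1+a^2}+1}=-\tan\big(\tfrac12\tan^{-1}a\big)$. Then $$\gamma_{\beta,a}(t+t_0)=\gamma^{\mathrm v}_{\beta+\pi/2-2\tan^{-1}s,\ s}(t)\qquad\text{for all }t\in\mathbb R.$$
   Context: Horocyclic parameterization: $\gamma_{\beta,a}(t)=e^{i\beta}\frac{(2+ia)\tanh(t/2)+ia}{ia\tanh(t/2)-2+ia}$, $(\beta,a,t)\in\mathbb S^1\times\mathbb R\times\mathbb R$. Vertex parameterization: $\gamma^{\mathrm v}_{\omega,s}(t)=e^{i\omega}\frac{s+i\tanh(t/2)}{1+is\tanh(t/2)}$, $(\omega,s)\in\mathbb S^1\times(-1,1)$, $t\in\mathbb R$. Both are unit-speed geodesics of the Poincaré metric $g_H=\frac{4|dz|^2}{(1-|z|^2)^2}$ on the open unit disk. *)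

(* Defs.v *)
From Stdlib Require Import Reals.
From Coquelicot Require Export Coquelicot.
Open Scope R_scope.

Definition tanh (x : R) : R := (exp x - exp (- x)) / (exp x + exp (- x)).

(* e^{i b} for b : R (angles b represent points of S^1 = R / 2piZ) *)
Definition cexpi (b : R) : C := (cos b, sin b).

Definition ci : C := (0, 1).

Definition gamma_h (beta a t : R) : C :=
  Cmult (cexpi beta)
    (Cdiv (Cplus (Cmult (Cplus (RtoC 2) (Cmult ci (RtoC a))) (RtoC (tanh (t / 2))))
                 (Cmult ci (RtoC a)))
          (Cplus (Cminus (Cmult (Cmult ci (RtoC a)) (RtoC (tanh (t / 2)))) (RtoC 2))
                 (Cmult ci (RtoC a)))).

Definition gamma_v (omega s t : R) : C :=
  Cmult (cexpi omega)
    (Cdiv (Cplus (RtoC s) (Cmult ci (RtoC (tanh (t / 2)))))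
          (Cplus (RtoC 1) (Cmult (Cmult ci (RtoC s)) (RtoC (tanh (t / 2)))))).

(* Main.v *)
Require Import Defs.
From Stdlib Require Import Reals Lra.
From Coquelicot Require Import Coquelicot.
Open Scope R_scope.
Lemma tanh_half x : Defs.tanh (x/2) = (exp x - 1)/(exp x + 1).
Proof.
  unfold Defs.tanh.
  assert (H: exp x = exp (x/2) * exp (x/2)) by (rewrite <- exp_plus; f_equal; field).
  rewrite exp_Ropp, H. pose proof (exp_pos (x/2)). field. split; nra.
Qed.

Theorem lemma3p7 (a beta : R) :
  let t0 := - ln (sqrt (1 + a ^ 2)) in
  let s := - a / (sqrt (1 + a ^ 2) + 1) in
  s = - tan (atan a / 2) /\
  (forall t : R, gamma_h beta a (t + t0) = gamma_v (beta + PI / 2 - 2 * atan s) s t).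
Proof.
  intros t0 s.
  assert (Hr0 : 0 < 1 + a^2) by nra.
  set (r := sqrt (1 + a^2)) in *.
  assert (Hr : r * r = 1 + a^2) by (apply sqrt_sqrt; lra).
  assert (Hrp : 0 < r) by (apply sqrt_lt_R0; lra).
  assert (Hs : s * (r + 1) = - a) by (unfold s; field; lra).
  split.
  - pose proof (atan_bound a) as [B1 B2].
    set (h := atan a / 2).
    assert (Ha : atan a = 2 * h) by (unfold h; field).
    assert (Hc : 0 < cos h) by (apply cos_gt_0; unfold h; lra).
    pose proof (cos_atan a) as C. pose proof (sin_atan a) as S.
    rewrite Ha, cos_2a, sin_2a in *. fold r in C, S.
    replace (1 + a²) with (1 + a^2) in C, S by (unfold Rsqr; ring). fold r in C, S.
    pose proof (sin2_cos2 h) as P. unfold Rsqr in P.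
    assert (E1 : a = 2 * r * sin h * cos h) by (replace (2*r*sin h*cos h) with (r*(2*sin h*cos h)) by ring; rewrite S; field; lra).
    assert (E2 : 2 * r * (cos h * cos h) = r + 1).
    { assert (r * (cos h * cos h - sin h * sin h) = 1) by (rewrite C; field; lra). nra. }
    unfold tan, s. apply Rminus_diag_uniq. field_simplify; [| split; nra].
    replace (- a * cos h + r * sin h + sin h) with (sin h * (r + 1 - 2 * r * (cos h * cos h))) by (rewrite E1; ring).
    rewrite E2. unfold Rdiv. ring.
  - intro t.
    assert (Hs2 : s * s * (r + 1) = r - 1).
    { apply Rmult_eq_reg_r with (r + 1); [|lra]. 
      transitivity ((s * (r+1)) * (s * (r + 1))); [ring|]. rewrite Hs. nra. }
    assert (Hd : 0 < 1 - s * s).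
    { assert (s * s = (r - 1) / (r + 1)) by (rewrite <- Hs2; field; lra).
      rewrite H. apply Rlt_Rminus. apply Rmult_lt_reg_r with (r+1); [lra|].
      unfold Rdiv; rewrite Rmult_assoc, Rinv_l; lra. }
    assert (Ha' : a = - 2 * s / (1 - s * s)).
    { assert (E : a * (1 - s * s) = -2 * s).
      { replace a with (-(s*(r+1))) by lra.
        transitivity (-(s*(r+1)) + s*(s*s*(r+1))); [ring | rewrite Hs2; ring]. }
      rewrite <- E. field. lra. }
    assert (Hr' : r = (1 + s * s) / (1 - s * s)).
    { assert (E : r * (1 - s * s) = 1 + s * s) by nra.
      rewrite <- E. field. lra. }
    assert (HT : Defs.tanh ((t + t0) / 2) = (exp t / r - 1) / (exp t / r + 1)).
    { rewrite tanh_half. unfold t0. rewrite exp_plus, exp_Ropp, exp_ln by lra. reflexivity. }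
    assert (Hc2 : cos (2 * atan s) = (1 - s * s) / (1 + s * s)).
    { rewrite cos_2a, cos_atan, sin_atan. assert (0 < 1 + s²) by (unfold Rsqr; nra).
      pose proof (sqrt_sqrt (1 + s²) (Rlt_le _ _ H)). unfold Rsqr in *. field_simplify; [| nra | apply Rgt_not_eq, sqrt_lt_R0; nra].
      rewrite pow2_sqrt by nra. field. nra. }
    assert (Hs2' : sin (2 * atan s) = 2 * s / (1 + s * s)).
    { rewrite sin_2a, cos_atan, sin_atan. assert (0 < 1 + s²) by (unfold Rsqr; nra).
      pose proof (sqrt_sqrt (1 + s²) (Rlt_le _ _ H)). unfold Rsqr in *. field_simplify; [| nra | apply Rgt_not_eq, sqrt_lt_R0; nra].
      rewrite pow2_sqrt by nra. field. nra. }
    replace (beta + PI / 2 - 2 * atan s) with ((beta - 2 * atan s) + PI / 2) by ring.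
    unfold gamma_h, gamma_v, cexpi, ci, Cdiv, Cinv, Cmult, Cplus, Cminus, Copp, RtoC.
    simpl. rewrite HT, tanh_half, cos_plus, sin_plus, cos_PI2, sin_PI2, cos_minus, sin_minus, Hc2, Hs2'.
    pose proof (exp_pos t) as Ep.
    clearbody r s t0. subst a r. simpl.
    assert (0 < 1 + s*s) by nra.
    assert (0 < exp t * (1 - s * s) + (1 + s * s)) by nra.
    assert (Hpos : forall Y, 4 * ((exp t * (1 - s * s) + (1 + s * s)) * (1 - s * s) *
       ((exp t * (1 - s * s) + (1 + s * s)) * (1 - s * s))) + Y * Y <> 0).
    { intro Y. apply Rgt_not_eq. apply Rplus_lt_le_0_compat;
      [ apply Rmult_lt_0_compat; [lra|]; apply Rmult_lt_0_compat; apply Rmult_lt_0_compat; lra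
      | apply Rle_0_sqr ]. }
    apply injective_projections; simpl;
      field; repeat split; try nra; apply Hpos.
Qed.
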